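(* Let $(G,+,\bullet)$ be an interchange near ring containing an annihilator, i.e. an element $a\in G$ with $a\bullet x = x\bullet a = a$ for every $x\in G$. Then $(G,\bullet)$ is a zero semigroup: in fact $x\bullet y = 0$ for all $x,y\in G$.
   Context: An interchange near ring is a triple $(G,+,\bullet)$ where $(G,+)$ is a group (written additively, not necessarily abelian, with identity $0$) and $\bullet$ is a binary operation on $G$ satisfying the interchange law $(w+x)\bullet(y+z) = (w\bullet y)+(x\bullet z)$ for all $w,x,y,z\in G$. A zero semigroup is a semigroup $(S,\cdot)$ satisfying $w\cdot x = y\cdot z$ for all $w,x,y,z\in S$. *)

(* Defs.v *)
Record is_group (G : Type) (add : G -> G -> G) (zero : G) (opp : G -> G) : Prop := {
  grp_assoc : forall x y z, add x (add y z) = add (add x y) z;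
  grp_zero_l : forall x, add zero x = x;
  grp_zero_r : forall x, add x zero = x;
  grp_opp_l : forall x, add (opp x) x = zero;
  grp_opp_r : forall x, add x (opp x) = zero
}.

Definition interchange_near_ring (G : Type) (add : G -> G -> G) (zero : G)
  (opp : G -> G) (mul : G -> G -> G) : Prop :=
  is_group G add zero opp /\
  forall w x y z, mul (add w x) (add y z) = add (mul w y) (mul x z).

Definition zero_semigroup (S : Type) (mul : S -> S -> S) : Prop :=
  (forall x y z, mul x (mul y z) = mul (mul x y) z) /\
  (forall w x y z, mul w x = mul y z).

(* Main.v *)
Require Import Defs.

Theorem proposition2p3 (G : Type) (add : G -> G -> G) (zero : G) (opp : G -> G)
  (mul : G -> G -> G)
  (HG : interchange_near_ring G add zero opp mul)
  (a : G) (Ha : forall x, mul a x = a /\ mul x a = a) :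
  zero_semigroup G mul /\ (forall x y, mul x y = zero).
Proof.
  destruct HG as [[As Zl Zr Ol Or] I].
  assert (Haa : add a a = a).
  { pose proof (I a zero zero a) as H.
    rewrite Zr, Zl in H. rewrite (proj1 (Ha a)), (proj1 (Ha zero)), (proj2 (Ha zero)) in H.
    congruence. }
  assert (Ha0 : a = zero).
  { assert (H := f_equal (add (opp a)) Haa).
    rewrite As, Ol, Zl in H. exact H. }
  assert (K : forall x y, mul x y = zero).
  { intros x y. pose proof (I x zero zero y) as H.
    rewrite Zr, Zl in H. rewrite H. subst a.
    rewrite (proj2 (Ha x)), (proj1 (Ha y)). apply Zl. }
  split; [split|exact K].
  - intros. rewrite !K. reflexivity.
  - intros. rewrite !K. reflexivity.
Qed.
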